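(* Let $J=JCK(Z,\delta)$. Relative to the $\mathbb Z_2^2$-grading of $\mathrm{Der}(J)$ induced by that of $J$, $\mathrm{Der}(J)_{\bar1}^{[\bar0,\bar0]}=D(Z,Zx)=\{\tilde\eta_a:a\in Z\}$, $\mathrm{Der}(J)_{\bar1}^{[\bar1,\bar0]}=D(w_1,Zx)$, $\mathrm{Der}(J)_{\bar1}^{[\bar0,\bar1]}=D(w_2,Zx)$, $\mathrm{Der}(J)_{\bar1}^{[\bar1,\bar1]}=D(w_3,Zx)$, and $\mathrm{Der}(J)_{\bar1}$ is the direct sum of these components.
   Context: Let $\mathbb F$ be a field of characteristic $\neq 2$, $Z$ a unital commutative associative $\mathbb F$-algebra, and $\delta$ a derivation of $Z$ such that $Z\delta(Z)=Z$ (the $\mathbb F$-span of all products $f\delta(g)$, $f,g\in Z$, is $Z$). The Cheng-Kac Jordan superalgebra $J=JCK(Z,\delta)=J_{\bar0}\oplus J_{\bar1}$ is defined as follows: $J_{\bar0}=Z1\oplus Zw_1\oplus Zw_2\oplus Zw_3$ and $J_{\bar1}=Zx\oplus Zx_1\oplus Zx_2\oplus Zx_3$ are free $Z$-modules of rank 4; $J_{\bar0}$ is the $Z$-algebra $(\mathbb F1\oplus\mathbb Fw_1\oplus\mathbb Fw_2\oplus\mathbb Fw_3)\otimes_{\mathbb F}Z$ with $1$ the identity, $w_1^2=w_2^2=1$, $w_3^2=-1$, $w_iw_j=0$ for $i\ne j$. For $f,g\in Z$ and $i,j\in\{1,2,3\}$ the remaining products are: $f(gx)=(fg)x$, $f(gx_j)=(fg)x_j$,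 $(fw_i)(gx)=(\delta(f)g)x_i$, $(fw_i)(gx_j)=-(fg)x_{i\times j}$, $(fx)(gx)=\delta(f)g-f\delta(g)$, $(fx)(gx_j)=-(fg)w_j$, $(fx_i)(gx)=(fg)w_i$, $(fx_i)(gx_j)=0$, extended by supercommutativity ($ab=(-1)^{|a||b|}ba$), where $x_{1\times2}=-x_{2\times1}=x_3$, $x_{1\times3}=-x_{3\times1}=x_2$, $x_{3\times2}=-x_{2\times3}=x_1$, $x_{i\times i}=0$. $J$ is $\mathbb Z_2^2$-graded by $J^{[\bar0,\bar0]}=Z\oplus Zx$, $J^{[\bar1,\bar0]}=Zw_1\oplus Zx_1$, $J^{[\bar0,\bar1]}=Zw_2\oplus Zx_2$, $J^{[\bar1,\bar1]}=Zw_3\oplus Zx_3$, and $\mathrm{Der}(J)^{\alpha}$ denotes the derivations mapping each $J^{\beta}$ into $J^{\alpha+\beta}$. Derivations are super derivations (homogeneous $d$ with $d(ab)=d(a)b+(-1)^{|d||a|}ad(b)$); $D(a,b)$ is $c\mapsto a(bc)-(-1)^{|a||b|}b(ac)$; $D(A,B)$ denotes the span of $D(a,b)$, $a\in A,b\in B$. For $a\in Z$, $\tilde\eta_a$ is the odd derivation of $J$ with $\tilde\eta_a(Z)=0$, $\tilde\eta_a(x)=a$, $\tilde\eta_a(x_j)=0$ for $j=1,2,3$. *)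

(* Defs.v *)
From HB Require Import structures.
From mathcomp Require Import all_boot all_order all_algebra.
Set Implicit Arguments. Unset Strict Implicit. Unset Printing Implicit Defensive.
Import Order.TTheory GRing.Theory Num.Theory.
Local Open Scope ring_scope.

(* The Cheng-Kac Jordan superalgebra JCK(Z, delta), as an F-superalgebra.
   An element is
     e0*1 + e1*w1 + e2*w2 + e3*w3  +  o0*x + o1*x1 + o2*x2 + o3*x3
   with all coefficients in Z. *)
Record JCK (F : fieldType) (Z : comAlgType F) := mkJ {
  e0 : Z; e1 : Z; e2 : Z; e3 : Z; o0 : Z; o1 : Z; o2 : Z; o3 : Z }.

Section CK.
Variables (F : fieldType) (Z : comAlgType F) (delta : Z -> Z).

Local Notation J := (JCK Z).

Definition zeroJ : J := mkJ 0 0 0 0 0 0 0 0.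
Definition addJ (u v : J) : J :=
  mkJ (e0 u + e0 v) (e1 u + e1 v) (e2 u + e2 v) (e3 u + e3 v)
      (o0 u + o0 v) (o1 u + o1 v) (o2 u + o2 v) (o3 u + o3 v).
Definition scaleJ (c : F) (u : J) : J :=
  mkJ (c *: e0 u) (c *: e1 u) (c *: e2 u) (c *: e3 u)
      (c *: o0 u) (c *: o1 u) (c *: o2 u) (c *: o3 u).

Definition jZ  (f : Z) : J := mkJ f 0 0 0 0 0 0 0.
Definition jw1 (f : Z) : J := mkJ 0 f 0 0 0 0 0 0.
Definition jw2 (f : Z) : J := mkJ 0 0 f 0 0 0 0 0.
Definition jw3 (f : Z) : J := mkJ 0 0 0 f 0 0 0 0.
Definition jx  (f : Z) : J := mkJ 0 0 0 0 f 0 0 0.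
Definition jx1 (f : Z) : J := mkJ 0 0 0 0 0 f 0 0.
Definition jx2 (f : Z) : J := mkJ 0 0 0 0 0 0 f 0.
Definition jx3 (f : Z) : J := mkJ 0 0 0 0 0 0 0 f.

(* The product, i.e. the F-bilinear extension of the multiplication table:
   (f1)(g1)=fg, (fw_i)(g1)=fg w_i, w_1^2=w_2^2=1, w_3^2=-1, w_iw_j=0 (i<>j),
   (f)(gx)=fg x, (f)(gx_j)=fg x_j, (fw_i)(gx)=delta(f)g x_i,
   (fw_i)(gx_j)=-fg x_{ixj}, (fx)(gx)=delta(f)g - f delta(g),
   (fx)(gx_j)=-fg w_j, (fx_i)(gx)=fg w_i, (fx_i)(gx_j)=0,
   extended by supercommutativity. *)
(* (even part (a0,a1,a2,a3)) * (odd part (b0,b1,b2,b3)), an odd element *)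
Definition EO (a0 a1 a2 a3 b0 b1 b2 b3 : Z) : Z * Z * Z * Z :=
  (a0 * b0,
   a0 * b1 + delta a1 * b0 - a3 * b2 + a2 * b3,
   a0 * b2 + delta a2 * b0 - a1 * b3 + a3 * b1,
   a0 * b3 + delta a3 * b0 - a1 * b2 + a2 * b1).

Definition mulJ (u v : J) : J :=
  let: (p0, p1, p2, p3) := EO (e0 u) (e1 u) (e2 u) (e3 u) (o0 v) (o1 v) (o2 v) (o3 v) in
  let: (q0, q1, q2, q3) := EO (e0 v) (e1 v) (e2 v) (e3 v) (o0 u) (o1 u) (o2 u) (o3 u) in
  mkJ (e0 u * e0 v + e1 u * e1 v + e2 u * e2 v - e3 u * e3 v
         + (delta (o0 u) * o0 v - o0 u * delta (o0 v)))
      (e0 u * e1 v + e1 u * e0 v + (o1 u * o0 v - o0 u * o1 v))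
      (e0 u * e2 v + e2 u * e0 v + (o2 u * o0 v - o0 u * o2 v))
      (e0 u * e3 v + e3 u * e0 v + (o3 u * o0 v - o0 u * o3 v))
      (p0 + q0) (p1 + q1) (p2 + q2) (p3 + q3).

Definition is_even (u : J) : Prop := u = mkJ (e0 u) (e1 u) (e2 u) (e3 u) 0 0 0 0.
Definition is_odd (u : J) : Prop := u = mkJ 0 0 0 0 (o0 u) (o1 u) (o2 u) (o3 u).

(* Z_2^2 grading: degree g = (g.1, g.2) in Z_2 x Z_2 (true = 1bar).
   J^[0,0] = Z + Zx, J^[1,0] = Zw1 + Zx1, J^[0,1] = Zw2 + Zx2,
   J^[1,1] = Zw3 + Zx3. *)
Definition proj_grade (g : bool * bool) (u : J) : J :=
  match g with
  | (false, false) => mkJ (e0 u) 0 0 0 (o0 u) 0 0 0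
  | (true, false)  => mkJ 0 (e1 u) 0 0 0 (o1 u) 0 0
  | (false, true)  => mkJ 0 0 (e2 u) 0 0 0 (o2 u) 0
  | (true, true)   => mkJ 0 0 0 (e3 u) 0 0 0 (o3 u)
  end.
Definition in_grade (g : bool * bool) (u : J) : Prop := proj_grade g u = u.
Definition gadd (g h : bool * bool) : bool * bool :=
  (xorb g.1 h.1, xorb g.2 h.2).

Definition odd_derivation (d : J -> J) : Prop :=
  [/\ (forall u v, d (addJ u v) = addJ (d u) (d v)),
      (forall (c : F) u, d (scaleJ c u) = scaleJ c (d u)),
      (forall u, is_even u -> is_odd (d u)),
      (forall u, is_odd u -> is_even (d u)) &
      (forall a b,
         (is_even a -> d (mulJ a b) = addJ (mulJ (d a) b) (mulJ a (d b))) /\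
         (is_odd a -> d (mulJ a b) = addJ (mulJ (d a) b) (scaleJ (-1) (mulJ a (d b)))))].

Definition DerOdd_grade (g : bool * bool) (d : J -> J) : Prop :=
  odd_derivation d /\
  forall h u, in_grade h u -> in_grade (gadd g h) (d u).

(* D(a,b) : c |-> a(bc) - (-1)^{|a||b|} b(ac), with pa, pb the parities of a, b *)
Definition Dop (pa pb : bool) (a b : J) (c : J) : J :=
  addJ (mulJ a (mulJ b c))
       (scaleJ (if pa && pb then 1 else -1) (mulJ b (mulJ a c))).

Definition spanF (I : Type) (gen : I -> J -> J) (d : J -> J) : Prop :=
  exists l : seq (F * I),
    forall u, d u = foldr (fun p acc => addJ (scaleJ p.1 (gen p.2 u)) acc) zeroJ l.

Definition D_Z_Zx : (J -> J) -> Prop :=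
  spanF (fun p : Z * Z => Dop false true (jZ p.1) (jx p.2)).
Definition D_w1_Zx : (J -> J) -> Prop := spanF (fun g => Dop false true (jw1 1) (jx g)).
Definition D_w2_Zx : (J -> J) -> Prop := spanF (fun g => Dop false true (jw2 1) (jx g)).
Definition D_w3_Zx : (J -> J) -> Prop := spanF (fun g => Dop false true (jw3 1) (jx g)).

Definition is_eta (a : Z) (d : J -> J) : Prop :=
  [/\ odd_derivation d, (forall f, d (jZ f) = zeroJ), d (jx 1) = jZ a &
      [/\ d (jx1 1) = zeroJ, d (jx2 1) = zeroJ & d (jx3 1) = zeroJ]].

Definition sum4 (D : bool * bool -> J -> J) (u : J) : J :=
  addJ (addJ (D (false, false) u) (D (true, false) u))
       (addJ (D (false, true) u) (D (true, true) u)).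

End CK.

(* Main.v *)
Require Import Defs.
From HB Require Import structures.
From mathcomp Require Import all_boot all_order all_algebra.
From mathcomp Require Import ring.
From Stdlib Require Import FunctionalExtensionality.
Import GRing.Theory.
Local Open Scope ring_scope.
Set Warnings "-notation-overridden -ambiguous-paths".

Section S.
Variables (F : fieldType) (Z : comAlgType F) (delta : Z -> Z).
Hypothesis delta_add : forall f g, delta (f + g) = delta f + delta g.
Hypothesis delta_scale : forall (c : F) f, delta (c *: f) = c *: delta f.
Hypothesis delta_mul : forall f g, delta (f * g) = delta f * g + f * delta g.
Hypothesis charF : (2 \notin [pchar F])%N.
Hypothesis ZdZ : forall z : Z, exists l : seq (F * Z * Z),
           z = \sum_(p <- l) p.1.1 *: (p.1.2 * delta p.2).
Local Notation J := (JCK Z).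

Lemma delta0 : delta 0 = 0.
Proof. by have := delta_add 0 0; rewrite addr0 => /eqP; rewrite -subr_eq subrr eq_sym => /eqP. Qed.
Lemma deltaN f : delta (- f) = - delta f.
Proof. by apply/eqP; rewrite -subr_eq0 opprK -delta_add addNr delta0. Qed.
Lemma delta1 : delta 1 = 0.
Proof. by have := delta_mul 1 1; rewrite !mul1r mulr1 => /eqP; rewrite -subr_eq subrr eq_sym => /eqP. Qed.
Definition sc (c : F) : Z := c%:A.
Lemma scE (c : F) (x : Z) : c *: x = sc c * x.
Proof. by rewrite /sc mulr_algl. Qed.
Lemma delta_sc (c : F) : delta (sc c) = 0.
Proof. by rewrite /sc delta_scale delta1 scaler0. Qed.

Definition eta (a : Z) (u : J) : J :=
  mkJ (o0 u * a) 0 0 0 0 (- (e1 u * a)) (- (e2 u * a)) (- (e3 u * a)).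
Definition Dw1 (a : Z) := Dop delta false true (jw1 1) (jx a).
Definition Dw2 (a : Z) := Dop delta false true (jw2 1) (jx a).
Definition Dw3 (a : Z) := Dop delta false true (jw3 1) (jx a).


Lemma mulJE a0 a1 a2 a3 b0 b1 b2 b3 c0 c1 c2 c3 d0 d1 d2 d3 :
  mulJ delta (@mkJ F Z a0 a1 a2 a3 b0 b1 b2 b3) (@mkJ F Z c0 c1 c2 c3 d0 d1 d2 d3) =
  mkJ (a0 * c0 + a1 * c1 + a2 * c2 - a3 * c3 + (delta b0 * d0 - b0 * delta d0))
      (a0 * c1 + a1 * c0 + (b1 * d0 - b0 * d1))
      (a0 * c2 + a2 * c0 + (b2 * d0 - b0 * d2))
      (a0 * c3 + a3 * c0 + (b3 * d0 - b0 * d3))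
      (a0 * d0 + c0 * b0)
      (a0 * d1 + delta a1 * d0 - a3 * d2 + a2 * d3 + (c0 * b1 + delta c1 * b0 - c3 * b2 + c2 * b3))
      (a0 * d2 + delta a2 * d0 - a1 * d3 + a3 * d1 + (c0 * b2 + delta c2 * b0 - c1 * b3 + c3 * b1))
      (a0 * d3 + delta a3 * d0 - a1 * d2 + a2 * d1 + (c0 * b3 + delta c3 * b0 - c1 * b2 + c2 * b1)).
Proof. by []. Qed.
Lemma addJE a0 a1 a2 a3 b0 b1 b2 b3 c0 c1 c2 c3 d0 d1 d2 d3 :
  addJ (@mkJ F Z a0 a1 a2 a3 b0 b1 b2 b3) (@mkJ F Z c0 c1 c2 c3 d0 d1 d2 d3) =
  mkJ (a0 + c0) (a1 + c1) (a2 + c2) (a3 + c3) (b0 + d0) (b1 + d1) (b2 + d2) (b3 + d3).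
Proof. by []. Qed.
Lemma scaleJE c a0 a1 a2 a3 b0 b1 b2 b3 :
  scaleJ c (@mkJ F Z a0 a1 a2 a3 b0 b1 b2 b3) =
  mkJ (c *: a0) (c *: a1) (c *: a2) (c *: a3) (c *: b0) (c *: b1) (c *: b2) (c *: b3).
Proof. by []. Qed.


Ltac dnorm := rewrite ?scaleN1r ?scale1r ?scale0r ?scE; rewrite ?(delta_add, deltaN, delta_mul);
  rewrite ?delta0 ?delta1 ?delta_sc.
Ltac jnorm := rewrite /Dw1 /Dw2 /Dw3 /Dop /eta /= /jZ /jw1 /jw2 /jw3 /jx /jx1 /jx2 /jx3 /zeroJ;
  rewrite ?(addJE, scaleJE, mulJE) /=.
Ltac jsolve := jnorm; dnorm; congr mkJ; ring.

Definition DW1 a (u : J) : J := let: mkJ e0 e1 e2 e3 o0 o1 o2 o3 := u in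
  mkJ (-(a*o1)) (o0 * delta a - a * delta o0) (-(a*o3)) (-(a*o2))
      (-(a*e1)) (-(a * delta e0)) (-(a * delta e3)) (-(a * delta e2)).
Definition DW2 a (u : J) : J := let: mkJ e0 e1 e2 e3 o0 o1 o2 o3 := u in
  mkJ (-(a*o2)) (a * o3) (o0 * delta a - a * delta o0) (a * o1)
      (-(a*e2)) (a * delta e3) (-(a * delta e0)) (a * delta e1).
Definition DW3 a (u : J) : J := let: mkJ e0 e1 e2 e3 o0 o1 o2 o3 := u in
  mkJ (a*o3) (-(a * o2)) (a * o1) (o0 * delta a - a * delta o0)
      (a*e3) (-(a * delta e2)) (a * delta e1) (-(a * delta e0)).

Lemma Dw1E a u : Dw1 a u = DW1 a u.
Proof. case: u => ? ? ? ? ? ? ? ?. jsolve. Qed.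
Lemma Dw2E a u : Dw2 a u = DW2 a u.
Proof. case: u => ? ? ? ? ? ? ? ?. jsolve. Qed.
Lemma Dw3E a u : Dw3 a u = DW3 a u.
Proof. case: u => ? ? ? ? ? ? ? ?. jsolve. Qed.
Lemma DZE f g u : Dop delta false true (jZ f) (jx g) u = eta (g * delta f) u.
Proof. case: u => ? ? ? ? ? ? ? ?. jsolve. Qed.

Lemma evenE (u : J) : is_even u -> exists a0 a1 a2 a3, u = mkJ a0 a1 a2 a3 0 0 0 0.
Proof. by move=> ->; do 4 eexists. Qed.
Lemma oddE (u : J) : is_odd u -> exists a0 a1 a2 a3, u = mkJ 0 0 0 0 a0 a1 a2 a3.
Proof. by move=> ->; do 4 eexists. Qed.
Arguments evenE {u}. Arguments oddE {u}.

Ltac odtac := split;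
  [ move=> [? ? ? ? ? ? ? ?] [? ? ? ? ? ? ? ?]; jsolve
  | move=> ? [? ? ? ? ? ? ? ?]; jsolve
  | move=> ? /evenE [? [? [? [? ->]]]]; rewrite /is_odd; jsolve
  | move=> ? /oddE [? [? [? [? ->]]]]; rewrite /is_even; jsolve
  | move=> ? [? ? ? ? ? ? ? ?]; split => [/evenE | /oddE] [? [? [? [? ->]]]]; jsolve ].

Lemma od_DW1 a : odd_derivation delta (DW1 a). Proof. odtac. Qed.
Lemma od_DW2 a : odd_derivation delta (DW2 a). Proof. odtac. Qed.
Lemma od_DW3 a : odd_derivation delta (DW3 a). Proof. odtac. Qed.
Lemma od_eta a : odd_derivation delta (eta a). Proof. odtac. Qed.

Ltac grtac od := split; [exact: od | move=> [[] []] [? ? ? ? ? ? ? ?] <-; rewrite /in_grade /gadd /=;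
  jsolve].
Lemma gr_eta a : DerOdd_grade delta (false, false) (eta a). Proof. grtac od_eta. Qed.
Lemma gr_DW1 a : DerOdd_grade delta (true, false) (DW1 a). Proof. grtac od_DW1. Qed.
Lemma gr_DW2 a : DerOdd_grade delta (false, true) (DW2 a). Proof. grtac od_DW2. Qed.
Lemma gr_DW3 a : DerOdd_grade delta (true, true) (DW3 a). Proof. grtac od_DW3. Qed.

Definition linpar (G : Z -> J -> J) :=
  (forall u, G 0 u = zeroJ Z) /\ (forall a b u, G (a + b) u = addJ (G a u) (G b u)) /\
  (forall c a u, G (c *: a) u = scaleJ c (G a u)).
Ltac lptac := split; [|split]; [move=> [? ? ? ? ? ? ? ?] | move=> ? ? [? ? ? ? ? ? ? ?]
   | move=> ? ? [? ? ? ? ? ? ? ?]]; jsolve.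
Lemma lp_eta : linpar eta. Proof. lptac. Qed.
Lemma lp_DW1 : linpar DW1. Proof. lptac. Qed.
Lemma lp_DW2 : linpar DW2. Proof. lptac. Qed.
Lemma lp_DW3 : linpar DW3. Proof. lptac. Qed.

Lemma foldr_lin (I : Type) G (h : I -> Z) (lp : linpar G) (l : seq (F * I)) u :
  foldr (fun p acc => addJ (scaleJ p.1 (G (h p.2) u)) acc) (zeroJ Z) l =
  G (\sum_(p <- l) p.1 *: h p.2) u.
Proof.
case: lp => [G0 [GD GZ]].
elim: l => [|p l IH] /=; first by rewrite big_nil G0.
by rewrite big_cons GD GZ IH.
Qed.

Lemma spanF_ext (I : Type) (g1 g2 : I -> J -> J) d :
  (forall i u, g1 i u = g2 i u) -> spanF g1 d <-> spanF g2 d.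
Proof.
move=> E; split=> -[l Hl]; exists l => u; rewrite Hl;
  elim: l {Hl} => [|p l IH] //=; by rewrite E IH.
Qed.

Lemma span_iff G (lp : linpar G) d : spanF G d <-> exists a, forall u, d u = G a u.
Proof.
split=> [[l Hl]|[a Ha]].
  by exists (\sum_(p <- l) p.1 *: p.2) => u; rewrite Hl (@foldr_lin _ _ id lp).
exists [:: (1, a)] => u; rewrite (@foldr_lin _ _ id lp) big_cons big_nil addr0 scale1r.
exact: Ha.
Qed.

Lemma od_add d1 d2 : odd_derivation delta d1 -> odd_derivation delta d2 ->
  odd_derivation delta (fun u => addJ (d1 u) (d2 u)).
Proof.
case=> [a1 s1 e1 o1 L1] [a2 s2 e2 o2 L2]; split.
- move=> u v; rewrite a1 a2.
  case: (d1 u) (d1 v) (d2 u) (d2 v) => ? ? ? ? ? ? ? ? [? ? ? ? ? ? ? ?] [? ? ? ? ? ? ? ?] [? ? ? ? ? ? ? ?].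
  jsolve.
- move=> c u; rewrite s1 s2.
  case: (d1 u) (d2 u) => ? ? ? ? ? ? ? ? [? ? ? ? ? ? ? ?]; jsolve.
- move=> u /[dup] /e1 /oddE [? [? [? [? ->]]]] /e2 /oddE [? [? [? [? ->]]]]; rewrite /is_odd; jsolve.
- move=> u /[dup] /o1 /evenE [? [? [? [? ->]]]] /o2 /evenE [? [? [? [? ->]]]]; rewrite /is_even; jsolve.
- move=> a b; split=> H.
  + rewrite (proj1 (L1 a b) H) (proj1 (L2 a b) H).
    case: (d1 a) (d2 a) (d1 b) (d2 b) => ? ? ? ? ? ? ? ? [? ? ? ? ? ? ? ?] [? ? ? ? ? ? ? ?] [? ? ? ? ? ? ? ?].
    case: a b {H} => ? ? ? ? ? ? ? ? [? ? ? ? ? ? ? ?]; jsolve.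
  + rewrite (proj2 (L1 a b) H) (proj2 (L2 a b) H).
    case: (d1 a) (d2 a) (d1 b) (d2 b) => ? ? ? ? ? ? ? ? [? ? ? ? ? ? ? ?] [? ? ? ? ? ? ? ?] [? ? ? ? ? ? ? ?].
    case: a b {H} => ? ? ? ? ? ? ? ? [? ? ? ? ? ? ? ?]; jsolve.
Qed.

Lemma od_scale (c : F) d : odd_derivation delta d ->
  odd_derivation delta (fun u => scaleJ c (d u)).
Proof.
case=> [a1 s1 e1 o1 L1]; split.
- move=> u v; rewrite a1.
  case: (d u) (d v) => ? ? ? ? ? ? ? ? [? ? ? ? ? ? ? ?]; jsolve.
- move=> k u; rewrite s1.
  case: (d u) => ? ? ? ? ? ? ? ?; jsolve.
- move=> u /e1 /oddE [? [? [? [? ->]]]]; rewrite /is_odd; jsolve.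
- move=> u /o1 /evenE [? [? [? [? ->]]]]; rewrite /is_even; jsolve.
- move=> a b; split=> H.
  + rewrite (proj1 (L1 a b) H).
    case: (d a) (d b) => ? ? ? ? ? ? ? ? [? ? ? ? ? ? ? ?].
    case: a b {H} => ? ? ? ? ? ? ? ? [? ? ? ? ? ? ? ?]; jsolve.
  + rewrite (proj2 (L1 a b) H).
    case: (d a) (d b) => ? ? ? ? ? ? ? ? [? ? ? ? ? ? ? ?].
    case: a b {H} => ? ? ? ? ? ? ? ? [? ? ? ? ? ? ? ?]; jsolve.
Qed.
Lemma two_neq0 : (2%:R : F) != 0.
Proof. by rewrite natf_neq0_pchar pnatE //= inE. Qed.
Lemma half (t : Z) : t + t = 0 -> t = 0.
Proof.
move=> H; rewrite -[t]scale1r -(mulVf two_neq0) -scalerA scaler_nat [t *+ 2]mulr2n H.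
by rewrite scaler0.
Qed.
Lemma kill (y : Z) : (forall f, delta f * y = 0) -> y = 0.
Proof.
move=> H; have [l Hl] := ZdZ 1.
rewrite -[y]mul1r Hl mulr_suml big1 // => p _.
by rewrite -scalerAl -mulrA H mulr0 scaler0.
Qed.
Lemma lcE (k A B X Y : Z) : A = B -> X - Y = k * (A - B) -> X = Y.
Proof. by move=> -> /eqP; rewrite subrr mulr0 subr_eq0 => /eqP. Qed.
Arguments lcE k {A B X Y}.
Lemma lcE2 (k l : Z) {A B C D X Y : Z} : A = B -> C = D -> X - Y = k * (A - B) + l * (C - D) -> X = Y.
Proof. by move=> -> -> /eqP; rewrite !subrr !mulr0 addr0 subr_eq0 => /eqP. Qed.
Ltac lc e := first [apply: (lcE 1 e); ring | apply: (lcE (-1) e); ring].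
Ltac hz := first [ match goal with H : _ = _ |- _ => lc H end
                 | apply: half; match goal with H : _ = _ |- _ => lc H end ].

Lemma ev_gen : [/\ is_even (jZ (1:Z)), is_even (jw1 (1:Z)), is_even (jw2 (1:Z)) & is_even (jw3 (1:Z))].
Proof. by []. Qed.
Lemma od_gen : [/\ is_odd (jx (1:Z)), is_odd (jx1 (1:Z)), is_odd (jx2 (1:Z)) & is_odd (jx3 (1:Z))].
Proof. by []. Qed.

Lemma Z0 d : odd_derivation delta d -> e0 (d (jx 1)) = 0 -> e0 (d (jx1 1)) = 0 ->
  e0 (d (jx2 1)) = 0 -> e0 (d (jx3 1)) = 0 -> forall u, d u = zeroJ Z.
Proof.
move=> od; case: (od) => dadd dsc dev dodd dL.
case: ev_gen => eZ ew1 ew2 ew3; case: od_gen => ox ox1 ox2 ox3.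
have [y10 [y11 [y12 [y13 Hw1]]]] := oddE (dev _ ew1).
have [y20 [y21 [y22 [y23 Hw2]]]] := oddE (dev _ ew2).
have [y30 [y31 [y32 [y33 Hw3]]]] := oddE (dev _ ew3).
have [z0 [z1 [z2 [z3 Hx]]]] := evenE (dodd _ ox).
have [v10 [v11 [v12 [v13 Hx1]]]] := evenE (dodd _ ox1).
have [v20 [v21 [v22 [v23 Hx2]]]] := evenE (dodd _ ox2).
have [v30 [v31 [v32 [v33 Hx3]]]] := evenE (dodd _ ox3).
rewrite Hx Hx1 Hx2 Hx3 /= => z00 v100 v200 v300.
subst z0 v10 v20 v30.
have dz : d (zeroJ Z) = zeroJ Z.
  rewrite -(_ : scaleJ 0 (zeroJ Z) = zeroJ Z); last by jsolve.
  by rewrite dsc; case: (d _) => ? ? ? ? ? ? ? ?; jsolve.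
have d1 : d (jZ 1) = zeroJ Z.
  have := proj1 (dL (jZ 1) (jZ 1)) eZ.
  have -> : mulJ delta (jZ 1) (jZ 1) = jZ 1 by jsolve.
  have [p0 [p1 [p2 [p3 ->]]]] := oddE (dev _ eZ).
  jnorm; dnorm; case=> _ _ _ _ E0 E1 E2 E3; congr mkJ; [lc E0|lc E1|lc E2|lc E3].
have R61 := proj2 (dL (jx 1) (jx1 1)) ox.
have R62 := proj2 (dL (jx 1) (jx2 1)) ox.
have R63 := proj2 (dL (jx 1) (jx3 1)) ox.
rewrite (_ : mulJ delta (jx 1) (jx1 1) = scaleJ (-1) (jw1 1)) ?dsc ?Hw1 ?Hx ?Hx1 in R61; last by jsolve.
rewrite (_ : mulJ delta (jx 1) (jx2 1) = scaleJ (-1) (jw2 1)) ?dsc ?Hw2 ?Hx ?Hx2 in R62; last by jsolve.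
rewrite (_ : mulJ delta (jx 1) (jx3 1) = scaleJ (-1) (jw3 1)) ?dsc ?Hw3 ?Hx ?Hx3 in R63; last by jsolve.
move: R61 R62 R63; jnorm; dnorm.
case=> _ _ _ _ E1 _ _ _; have y100 : y10 = 0 by lc E1.
clear E1.
case=> _ _ _ _ E2 _ _ _; have y200 : y20 = 0 by lc E2.
clear E2.
case=> _ _ _ _ E3 _ _ _; have y300 : y30 = 0 by lc E3.
clear E3.
subst y10 y20 y30.
have R11 := proj1 (dL (jw1 1) (jw1 1)) ew1.
have R12 := proj1 (dL (jw2 1) (jw2 1)) ew2.
have R13 := proj1 (dL (jw3 1) (jw3 1)) ew3.
rewrite (_ : mulJ delta (jw1 1) (jw1 1) = jZ 1) ?d1 ?Hw1 in R11; last by jsolve.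
rewrite (_ : mulJ delta (jw2 1) (jw2 1) = jZ 1) ?d1 ?Hw2 in R12; last by jsolve.
rewrite (_ : mulJ delta (jw3 1) (jw3 1) = scaleJ (-1) (jZ 1)) ?dsc ?d1 ?Hw3 in R13; last by jsolve.
have [y12_0 y13_0] : y12 = 0 /\ y13 = 0 by move: R11; jnorm; dnorm; case=> *; split; hz.
have [y21_0 y23_0] : y21 = 0 /\ y23 = 0 by move: R12; jnorm; dnorm; case=> *; split; hz.
have [y31_0 y32_0] : y31 = 0 /\ y32 = 0 by move: R13; jnorm; dnorm; case=> *; split; hz.
subst y12 y13 y21 y23 y31 y32.
have R31 := proj1 (dL (jw1 1) (jx 1)) ew1.
have R32 := proj1 (dL (jw2 1) (jx 1)) ew2.
have R33 := proj1 (dL (jw3 1) (jx 1)) ew3.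
rewrite (_ : mulJ delta (jw1 1) (jx 1) = zeroJ Z) ?dz ?Hw1 ?Hx in R31; last by jsolve.
rewrite (_ : mulJ delta (jw2 1) (jx 1) = zeroJ Z) ?dz ?Hw2 ?Hx in R32; last by jsolve.
rewrite (_ : mulJ delta (jw3 1) (jx 1) = zeroJ Z) ?dz ?Hw3 ?Hx in R33; last by jsolve.
have [y11_0 z1_0] : y11 = 0 /\ z1 = 0 by move: R31; jnorm; dnorm; case=> *; split; hz.
have [y22_0 z2_0] : y22 = 0 /\ z2 = 0 by move: R32; jnorm; dnorm; case=> *; split; hz.
have [y33_0 z3_0] : y33 = 0 /\ z3 = 0 by move: R33; jnorm; dnorm; case=> *; split; hz.
subst y11 y22 y33 z1 z2 z3.
have R512 := proj2 (dL (jx1 1) (jx2 1)) ox1.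
have R513 := proj2 (dL (jx1 1) (jx3 1)) ox1.
have R523 := proj2 (dL (jx2 1) (jx3 1)) ox2.
rewrite (_ : mulJ delta (jx1 1) (jx2 1) = zeroJ Z) ?dz ?Hx1 ?Hx2 in R512; last by jsolve.
rewrite (_ : mulJ delta (jx1 1) (jx3 1) = zeroJ Z) ?dz ?Hx1 ?Hx3 in R513; last by jsolve.
rewrite (_ : mulJ delta (jx2 1) (jx3 1) = zeroJ Z) ?dz ?Hx2 ?Hx3 in R523; last by jsolve.
move: R512 R513 R523; jnorm; dnorm.
case=> _ _ _ _ _ A1 A2 A3. case=> _ _ _ _ _ B1 B2 B3. case=> _ _ _ _ _ C1 C2 C3.
clear R11 R12 R13 R31 R32 R33.
have v13_0 : v13 = 0 by hz. have v23_0 : v23 = 0 by hz.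
have v12_0 : v12 = 0 by hz. have v32_0 : v32 = 0 by hz.
have v21_0 : v21 = 0 by hz. have v31_0 : v31 = 0 by hz.
have v11e : v11 = - v22 by hz. have v22e : v22 = - v33 by hz.
subst v13 v23 v12 v32 v21 v31 v11 v22.
have v33_0 : v33 = 0 by hz.
subst v33. clear A1 A2 A3 B1 B2 B3 C1 C2 C3.
have [P0 [P1 [P2 [P3 HZ]]]] : exists P0 P1 P2 P3 : Z -> Z,
    forall f, d (jZ f) = mkJ 0 0 0 0 (P0 f) (P1 f) (P2 f) (P3 f).
  by exists (fun f => o0 (d (jZ f))), (fun f => o1 (d (jZ f))), (fun f => o2 (d (jZ f))),
     (fun f => o3 (d (jZ f))) => f; exact: (dev _ (erefl _)).
have Dw1f f : d (jw1 f) = mulJ delta (d (jZ f)) (jw1 1).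
  rewrite (_ : jw1 f = mulJ delta (jZ f) (jw1 1)); last by jsolve.
  rewrite (proj1 (dL _ _) (erefl _)) Hw1; rewrite HZ; jsolve.
have Dw2f f : d (jw2 f) = mulJ delta (d (jZ f)) (jw2 1).
  rewrite (_ : jw2 f = mulJ delta (jZ f) (jw2 1)); last by jsolve.
  rewrite (proj1 (dL _ _) (erefl _)) Hw2; rewrite HZ; jsolve.
have Dxf f : d (jx f) = mulJ delta (d (jZ f)) (jx 1).
  rewrite (_ : jx f = mulJ delta (jZ f) (jx 1)); last by jsolve.
  rewrite (proj1 (dL _ _) (erefl _)) Hx; rewrite HZ; jsolve.
have Dx1f f : d (jx1 f) = mulJ delta (d (jZ f)) (jx1 1).
  rewrite (_ : jx1 f = mulJ delta (jZ f) (jx1 1)); last by jsolve.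
  rewrite (proj1 (dL _ _) (erefl _)) Hx1; rewrite HZ; jsolve.
have Dx2f f : d (jx2 f) = mulJ delta (d (jZ f)) (jx2 1).
  rewrite (_ : jx2 f = mulJ delta (jZ f) (jx2 1)); last by jsolve.
  rewrite (proj1 (dL _ _) (erefl _)) Hx2; rewrite HZ; jsolve.
have R81 f g := proj1 (dL (jw1 f) (jx g)) (erefl _).
have R82 f g := proj1 (dL (jw2 f) (jx g)) (erefl _).
have E81 f g : mulJ delta (jw1 f) (jx g) = jx1 (delta f * g) by jsolve.
have E82 f g : mulJ delta (jw2 f) (jx g) = jx2 (delta f * g) by jsolve.
have Dw3f f : d (jw3 f) = mulJ delta (d (jZ f)) (jw3 1).
  rewrite (_ : jw3 f = mulJ delta (jZ f) (jw3 1)); last by jsolve.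
  rewrite (proj1 (dL _ _) (erefl _)) Hw3; rewrite HZ; jsolve.
have Dx3f f : d (jx3 f) = mulJ delta (d (jZ f)) (jx3 1).
  rewrite (_ : jx3 f = mulJ delta (jZ f) (jx3 1)); last by jsolve.
  rewrite (proj1 (dL _ _) (erefl _)) Hx3; rewrite HZ; jsolve.
have S1 (f g : Z) : (f * P1 g = 0) /\ (P3 f * g = 0) /\ (P2 f * g = 0) /\
    (f * delta (P0 g) = - P0 (delta f * g)).
  have := R81 f g; rewrite E81 Dx1f Dw1f Dxf !HZ.
  jnorm; dnorm; case=> *; (split; [|split; [|split]]); hz.
have S2 (f g : Z) : P1 f * g = 0.
  have := R82 f g; rewrite E82 Dx2f Dw2f Dxf !HZ.
  jnorm; dnorm; case=> *; hz.
have P1_0 f : P1 f = 0 by rewrite -[P1 f]mulr1 S2.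
have P2_0 f : P2 f = 0 by rewrite -[P2 f]mulr1; case: (S1 f 1) => _ [_ []].
have P3_0 f : P3 f = 0 by rewrite -[P3 f]mulr1; case: (S1 f 1) => _ [].
have P00 : P0 0 = 0.
  by have := HZ 0; rewrite (_ : jZ 0 = zeroJ Z) // dz => /(congr1 (@o0 F Z)).
have dP0 g : delta (P0 g) = 0.
  by case: (S1 1 g) => _ [_ [_]]; rewrite delta1 mul0r P00 oppr0 mul1r.
have P0M f g : P0 (f * g) = P0 f * g + f * P0 g.
  have := proj1 (dL (jZ f) (jZ g)) (erefl _).
  rewrite (_ : mulJ delta (jZ f) (jZ g) = jZ (f * g)); last by jsolve.
  rewrite !HZ; jnorm; dnorm; case=> *; hz.
have P0d f : P0 (delta f) = 0.
  case: (S1 f 1) => _ [_ [_]]; rewrite dP0 mulr0 mulr1 => /eqP.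
  by rewrite eq_sym oppr_eq0 => /eqP.
have P0_0 g : P0 g = 0.
  apply: kill => f; case: (S1 f g) => _ [_ [_]]; rewrite dP0 mulr0 P0M P0d mul0r add0r.
  by move/eqP; rewrite eq_sym oppr_eq0 => /eqP.
have HZ0 f : d (jZ f) = zeroJ Z by rewrite HZ P0_0 P1_0 P2_0 P3_0.
move=> [u0 u1 u2 u3 u4 u5 u6 u7].
rewrite (_ : mkJ u0 u1 u2 u3 u4 u5 u6 u7 = addJ (addJ (addJ (jZ u0) (jw1 u1)) (addJ (jw2 u2) (jw3 u3)))
   (addJ (addJ (jx u4) (jx1 u5)) (addJ (jx2 u6) (jx3 u7)))); last by jsolve.
rewrite !dadd Dw1f Dw2f Dw3f Dxf Dx1f Dx2f Dx3f !HZ0; jsolve.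
Qed.

Arguments od_add {d1 d2}. Arguments od_scale c {d}. Arguments Z0 {d}.
Definition Esum a0 a1 a2 a3 (u : J) :=
  addJ (addJ (eta a0 u) (DW1 a1 u)) (addJ (DW2 a2 u) (DW3 a3 u)).

Lemma subJ0 (x y : J) : addJ x (scaleJ (-1) y) = zeroJ Z -> x = y.
Proof. case: x y => ? ? ? ? ? ? ? ? [? ? ? ? ? ? ? ?]; jnorm; dnorm; case=> *; congr mkJ; hz. Qed.

Lemma main d : odd_derivation delta d -> forall u, d u =
  Esum (e0 (d (jx 1))) (- e0 (d (jx1 1))) (- e0 (d (jx2 1))) (e0 (d (jx3 1))) u.
Proof.
move=> od u; apply: subJ0.
have od' := od_add od (od_scale (-1) (od_add (od_add (od_eta (e0 (d (jx 1))))
   (od_DW1 (- e0 (d (jx1 1))))) (od_add (od_DW2 (- e0 (d (jx2 1)))) (od_DW3 (e0 (d (jx3 1))))))).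
apply: (Z0 od') => /=; dnorm; ring.
Qed.

Arguments main {d}.
Lemma e0_grade k (w : J) : in_grade k w -> k != (false, false) -> e0 w = 0.
Proof. by case: k => [[] []]; case: w => ? ? ? ? ? ? ? ? <-. Qed.

Arguments e0_grade {k w}.
Lemma addJ0 (x : J) : addJ x (zeroJ Z) = x.
Proof. by case: x => ? ? ? ? ? ? ? ?; rewrite /addJ /= !addr0. Qed.
Lemma add0J (x : J) : addJ (zeroJ Z) x = x.
Proof. by case: x => ? ? ? ? ? ? ? ?; rewrite /addJ /= !add0r. Qed.

Lemma DOG_ext g (d1 d2 : J -> J) : (forall u, d1 u = d2 u) ->
  DerOdd_grade delta g d2 -> DerOdd_grade delta g d1.
Proof. by move=> /functional_extensionality ->. Qed.

Lemma grade_main d :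
  (DerOdd_grade delta (false, false) d -> forall u, d u = eta (e0 (d (jx 1))) u) /\
  (DerOdd_grade delta (true, false) d -> forall u, d u = DW1 (- e0 (d (jx1 1))) u) /\
  (DerOdd_grade delta (false, true) d -> forall u, d u = DW2 (- e0 (d (jx2 1))) u) /\
  (DerOdd_grade delta (true, true) d -> forall u, d u = DW3 (e0 (d (jx3 1))) u).
Proof.
have [e00 _] := lp_eta; have [d10 _] := lp_DW1; have [d20 _] := lp_DW2; have [d30 _] := lp_DW3.
split; [|split; [|split]] => -[od gr] u; rewrite (main od u) /Esum.
- rewrite (e0_grade (gr _ _ (erefl : in_grade (true, false) (jx1 1)))) //.
  rewrite (e0_grade (gr _ _ (erefl : in_grade (false, true) (jx2 1)))) //.
  rewrite (e0_grade (gr _ _ (erefl : in_grade (true, true) (jx3 1)))) //.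
  by rewrite ?oppr0 ?e00 ?d10 ?d20 ?d30 ?addJ0 ?add0J ?addJ0 ?add0J.
- rewrite (e0_grade (gr _ _ (erefl : in_grade (false, false) (jx 1)))) //.
  rewrite (e0_grade (gr _ _ (erefl : in_grade (false, true) (jx2 1)))) //.
  rewrite (e0_grade (gr _ _ (erefl : in_grade (true, true) (jx3 1)))) //.
  by rewrite ?oppr0 ?e00 ?d10 ?d20 ?d30 ?addJ0 ?add0J ?addJ0 ?add0J.
- rewrite (e0_grade (gr _ _ (erefl : in_grade (false, false) (jx 1)))) //.
  rewrite (e0_grade (gr _ _ (erefl : in_grade (true, false) (jx1 1)))) //.
  rewrite (e0_grade (gr _ _ (erefl : in_grade (true, true) (jx3 1)))) //.
  by rewrite ?oppr0 ?e00 ?d10 ?d20 ?d30 ?addJ0 ?add0J ?addJ0 ?add0J.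
- rewrite (e0_grade (gr _ _ (erefl : in_grade (false, false) (jx 1)))) //.
  rewrite (e0_grade (gr _ _ (erefl : in_grade (true, false) (jx1 1)))) //.
  rewrite (e0_grade (gr _ _ (erefl : in_grade (false, true) (jx2 1)))) //.
  by rewrite ?oppr0 ?e00 ?d10 ?d20 ?d30 ?addJ0 ?add0J ?addJ0 ?add0J.
Qed.

Lemma DZ_iff d : D_Z_Zx delta d <-> exists a, forall u, d u = eta a u.
Proof.
rewrite /D_Z_Zx (@spanF_ext _ _ (fun p : Z * Z => eta (p.2 * delta p.1))); last first.
  by move=> i u; exact: DZE.
split=> [[l Hl]|[a Ha]].
  exists (\sum_(p <- l) p.1 *: (p.2.2 * delta p.2.1)) => u.
  by rewrite Hl (@foldr_lin _ _ (fun p : Z * Z => p.2 * delta p.1) lp_eta).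
have [l Hl] := ZdZ a.
exists (map (fun p : F * Z * Z => (p.1.1, (p.2, p.1.2))) l) => u.
rewrite (@foldr_lin _ _ (fun p : Z * Z => p.2 * delta p.1) lp_eta) big_map /=.
by rewrite -Hl.
Qed.

Lemma is_eta_iff d : (exists a, is_eta delta a d) <-> exists a, forall u, d u = eta a u.
Proof.
have [d10 _] := lp_DW1; have [d20 _] := lp_DW2; have [d30 _] := lp_DW3.
split=> [[a [od dZ dx [dx1 dx2 dx3]]]|[a Ha]].
  exists (e0 (d (jx 1))) => u; rewrite (main od u) /Esum dx1 dx2 dx3 /= oppr0.
  by rewrite d10 d20 d30 !addJ0.
exists a; have -> : d = eta a by apply: functional_extensionality.
split; first exact: od_eta.
- by move=> f; jsolve.
- by jsolve.
- by split; jsolve.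
Qed.

Arguments DOG_ext {g d1 d2}.
Lemma proj_add k (x y : J) : proj_grade k (addJ x y) = addJ (proj_grade k x) (proj_grade k y).
Proof. by case: k => [[] []]; case: x y => ? ? ? ? ? ? ? ? [? ? ? ? ? ? ? ?]; rewrite /addJ /= ?addr0. Qed.
Lemma proj_zero k : proj_grade k (zeroJ Z) = zeroJ Z.
Proof. by case: k => [[] []]. Qed.
Lemma proj_other k k' (w : J) : in_grade k' w -> proj_grade k w = if k' == k then w else zeroJ Z.
Proof. by case: k k' => [[] []] [[] []]; case: w => ? ? ? ? ? ? ? ? <-. Qed.
Lemma proj_in h (u : J) : in_grade h (proj_grade h u).
Proof. by case: h => [[] []]. Qed.
Lemma decomp (u : J) : u = addJ (addJ (proj_grade (false,false) u) (proj_grade (true,false) u))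
  (addJ (proj_grade (false,true) u) (proj_grade (true,true) u)).
Proof. by case: u => ? ? ? ? ? ? ? ?; rewrite /addJ /= ?addr0 ?add0r. Qed.

Lemma uniq4 (D : bool * bool -> J -> J) :
  (forall g, DerOdd_grade delta g (D g)) -> (forall u, sum4 D u = zeroJ Z) ->
  forall g u, D g u = zeroJ Z.
Proof.
move=> DG hsum.
have hom g h v : in_grade h v -> D g v = zeroJ Z.
  move=> hv; have H := congr1 (proj_grade (gadd g h)) (hsum v).
  rewrite /sum4 !proj_add proj_zero in H.
  rewrite (proj_other _ _ _ (proj2 (DG (false,false)) _ _ hv)) in H.
  rewrite (proj_other _ _ _ (proj2 (DG (true,false)) _ _ hv)) in H.
  rewrite (proj_other _ _ _ (proj2 (DG (false,true)) _ _ hv)) in H.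
  rewrite (proj_other _ _ _ (proj2 (DG (true,true)) _ _ hv)) in H.
  by move: H; case: g h {hv} => [[] []] [[] []] /=; rewrite ?addJ0 ?add0J.
move=> g u; case: (DG g) => -[dadd _ _ _ _] _.
rewrite (decomp u) !dadd !(hom g _ _ (proj_in _ _)).
by rewrite !addJ0.
Qed.

Lemma prop_sec :
  (forall d : J -> J,
     (DerOdd_grade delta (false, false) d <-> D_Z_Zx delta d) /\
     (D_Z_Zx delta d <-> exists a : Z, is_eta delta a d)) /\
  (forall d : J -> J, DerOdd_grade delta (true, false) d <-> D_w1_Zx delta d) /\
  (forall d : J -> J, DerOdd_grade delta (false, true) d <-> D_w2_Zx delta d) /\
  (forall d : J -> J, DerOdd_grade delta (true, true) d <-> D_w3_Zx delta d) /\
  (forall d : J -> J, odd_derivation delta d ->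
     exists D : bool * bool -> J -> J,
       (forall g, DerOdd_grade delta g (D g)) /\ (forall u, d u = sum4 D u)) /\
  (forall D : bool * bool -> J -> J,
     (forall g, DerOdd_grade delta g (D g)) ->
     (forall u, sum4 D u = zeroJ Z) ->
     forall g u, D g u = zeroJ Z).
Proof.
split; [|split; [|split; [|split; [|split]]]].
- move=> d; rewrite is_eta_iff DZ_iff; split => //; split.
  + by move=> H; exists (e0 (d (jx 1))); exact: (proj1 (grade_main d) H).
  + by case=> a Ha; apply: (DOG_ext Ha); exact: gr_eta.
- move=> d; rewrite /D_w1_Zx (@spanF_ext _ _ DW1); last by move=> i u; exact: Dw1E.
  rewrite (@span_iff _ lp_DW1); split.
  + by move=> H; eexists; exact: (proj1 (proj2 (grade_main d)) H).
  + by case=> a Ha; apply: (DOG_ext Ha); exact: gr_DW1.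
- move=> d; rewrite /D_w2_Zx (@spanF_ext _ _ DW2); last by move=> i u; exact: Dw2E.
  rewrite (@span_iff _ lp_DW2); split.
  + by move=> H; eexists; exact: (proj1 (proj2 (proj2 (grade_main d))) H).
  + by case=> a Ha; apply: (DOG_ext Ha); exact: gr_DW2.
- move=> d; rewrite /D_w3_Zx (@spanF_ext _ _ DW3); last by move=> i u; exact: Dw3E.
  rewrite (@span_iff _ lp_DW3); split.
  + by move=> H; eexists; exact: (proj2 (proj2 (proj2 (grade_main d))) H).
  + by case=> a Ha; apply: (DOG_ext Ha); exact: gr_DW3.
- move=> d od.
  exists (fun g => match g with
    | (false, false) => eta (e0 (d (jx 1)))
    | (true, false) => DW1 (- e0 (d (jx1 1)))
    | (false, true) => DW2 (- e0 (d (jx2 1)))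
    | (true, true) => DW3 (e0 (d (jx3 1))) end).
  split; first by case=> [[] []]; [exact: gr_DW3 | exact: gr_DW1 | exact: gr_DW2 | exact: gr_eta].
  by move=> u; rewrite (main od u).
- exact: uniq4.
Qed.
End S.

Theorem proposition4p3
  (F : fieldType) (Z : comAlgType F) (delta : Z -> Z)
  (charF : (2 \notin [pchar F])%N)
  (delta_add : forall f g, delta (f + g) = delta f + delta g)
  (delta_scale : forall (c : F) f, delta (c *: f) = c *: delta f)
  (delta_mul : forall f g, delta (f * g) = delta f * g + f * delta g)
  (ZdZ : forall z : Z, exists l : seq (F * Z * Z),
           z = \sum_(p <- l) p.1.1 *: (p.1.2 * delta p.2)) :
  (* Der(J)_1^[0,0] = D(Z, Zx) = { eta~_a : a in Z } *)
  (forall d : JCK Z -> JCK Z,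
     (DerOdd_grade delta (false, false) d <-> D_Z_Zx delta d) /\
     (D_Z_Zx delta d <-> exists a : Z, is_eta delta a d)) /\
  (* Der(J)_1^[1,0] = D(w1, Zx), etc. *)
  (forall d : JCK Z -> JCK Z, DerOdd_grade delta (true, false) d <-> D_w1_Zx delta d) /\
  (forall d : JCK Z -> JCK Z, DerOdd_grade delta (false, true) d <-> D_w2_Zx delta d) /\
  (forall d : JCK Z -> JCK Z, DerOdd_grade delta (true, true) d <-> D_w3_Zx delta d) /\
  (* Der(J)_1 is the direct sum of the four components *)
  (forall d : JCK Z -> JCK Z, odd_derivation delta d ->
     exists D : bool * bool -> JCK Z -> JCK Z,
       (forall g, DerOdd_grade delta g (D g)) /\ (forall u, d u = sum4 D u)) /\
  (forall D : bool * bool -> JCK Z -> JCK Z,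
     (forall g, DerOdd_grade delta g (D g)) ->
     (forall u, sum4 D u = zeroJ Z) ->
     forall g u, D g u = zeroJ Z).
Proof. by apply: prop_sec. Qed.
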